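(* Let $H$ be an almost-breakable monoid. If $\mathcal{P}_{\mathrm{fin},1}(H)$ is UmF, then every minimal factorization of every element of $\mathcal{P}_{\mathrm{fin},1}(H)$ is square-free (no irreducible occurs more than once as a letter).
   Context: A monoid $H$ is almost-breakable if for all $x,y\in H$, $xy\in\{x,y\}$ or $yx\in\{x,y\}$. $\mathcal{P}_{\mathrm{fin},1}(H)$ denotes the set of non-empty finite subsets of $H$ containing $1_H$, a monoid under $XY=\{xy:x\in X,y\in Y\}$. In a monoid $M$: $x\mid_M y$ iff $y\in MxM$; $x,y$ are associated if each divides the other; proper divisor means divides but not associated. A unit-divisor divides $1_M$; otherwise it is a non-unit-divisor. An irreducible is a non-unit-divisor $a$ with $a\neq xy$ for all non-unit-divisors $x,y$ properly dividing $a$. A factorization of $x$ is a finite word over the irreducibles with product $x$. For words $\mathfrak a,\mathfrak b$, $\mathfrak a\sqsubseteq\mathfrak b$ means $\mathfrak a$ is, up to associatedness of letters, a subword (subsequence) of some permutation of $\mathfrak b$; equivalence means $\sqsubseteq$ both ways. A factorization $\mathfrak a$ of $x$ is minimal if no factorization $\mathfrak b$ of $x$ satisfies $\mathfrak b\sqsubseteq\mathfrak a\not\sqsubseteq\mathfrak b$. $M$ is UmF if every non-unit-divisor has a factorization and any two minimal factorizations of an element are equivalent. *)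

(* Defs.v *)
From Stdlib Require Import List Permutation FunctionalExtensionality PropExtensionality ProofIrrelevance.
Import ListNotations.
Set Implicit Arguments.

Record monoid := Monoid {
  mcar :> Type;
  mop : mcar -> mcar -> mcar;
  mone : mcar;
  mopA : forall x y z, mop x (mop y z) = mop (mop x y) z;
  mop1l : forall x, mop mone x = x;
  mop1r : forall x, mop x mone = x
}.
Arguments mop {m}.

Definition almost_breakable (H : monoid) : Prop :=
  forall x y : H,
    (mop x y = x \/ mop x y = y) \/ (mop y x = x \/ mop y x = y).

Section Factorization.
Variable M : monoid.

Definition mdivides (x y : M) : Prop := exists a b : M, y = mop (mop a x) b.
Definition massoc (x y : M) : Prop := mdivides x y /\ mdivides y x.
Definition proper_divisor (x y : M) : Prop := mdivides x y /\ ~ massoc x y.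
Definition unit_divisor (x : M) : Prop := mdivides x (mone M).

Definition irreducible (a : M) : Prop :=
  ~ unit_divisor a /\
  forall x y : M, ~ unit_divisor x -> ~ unit_divisor y ->
    proper_divisor x a -> proper_divisor y a -> a <> mop x y.

Definition word_prod (w : list M) : M := fold_right (@mop M) (mone M) w.

Definition factorization (w : list M) (x : M) : Prop :=
  Forall irreducible w /\ word_prod w = x.

Inductive subword {A : Type} : list A -> list A -> Prop :=
| subword_nil : subword [] []
| subword_skip : forall x s t, subword s t -> subword s (x :: t)
| subword_keep : forall x s t, subword s t -> subword (x :: s) (x :: t).

Definition wle (a b : list M) : Prop :=
  exists b', Permutation b b' /\
  exists s, subword s b' /\ Forall2 massoc a s.

Definition wequiv (a b : list M) : Prop := wle a b /\ wle b a.

Definition minimal_factorization (a : list M) (x : M) : Prop :=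
  factorization a x /\
  ~ (exists b, factorization b x /\ wle b a /\ ~ wle a b).

Definition UmF : Prop :=
  (forall x : M, ~ unit_divisor x -> exists a, factorization a x) /\
  (forall (x : M) (a b : list M),
     minimal_factorization a x -> minimal_factorization b x -> wequiv a b).

End Factorization.

Section Pfin1.
Variable H : monoid.

Definition finite_set (X : H -> Prop) : Prop :=
  exists l : list H, forall x, X x <-> In x l.

Definition is_fin1 (X : H -> Prop) : Prop := finite_set X /\ X (mone H).

Definition Pfin1_car := { X : H -> Prop | is_fin1 X }.

Definition setmul (X Y : H -> Prop) : H -> Prop :=
  fun z => exists x y, X x /\ Y y /\ z = mop x y.

Lemma setmul_fin1 X Y : is_fin1 X -> is_fin1 Y -> is_fin1 (setmul X Y).
Proof.
  intros [[lx HX] X1] [[ly HY] Y1]; split.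
  - exists (map (fun p => mop (fst p) (snd p)) (list_prod lx ly)).
    intro z; split.
    + intros (x & y & Hx & Hy & ->).
      apply (in_map (fun p => mop (fst p) (snd p)) _ (x, y)).
      apply in_prod; [apply HX | apply HY]; assumption.
    + intro Hz; apply in_map_iff in Hz as [[x y] [<- Hp]].
      apply in_prod_iff in Hp as [Hx Hy].
      exists x, y; split; [apply HX; auto | split; [apply HY; auto | reflexivity]].
  - exists (mone H), (mone H); split; [auto | split; [auto | now rewrite mop1l]].
Qed.

Definition Pfin1_op (X Y : Pfin1_car) : Pfin1_car :=
  exist _ (setmul (proj1_sig X) (proj1_sig Y))
    (setmul_fin1 (proj2_sig X) (proj2_sig Y)).

Definition single1 : H -> Prop := fun z => z = mone H.

Lemma single1_fin1 : is_fin1 single1.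
Proof.
  split.
  - exists [mone H]; intro z; unfold single1; simpl; intuition.
  - reflexivity.
Qed.

Definition Pfin1_one : Pfin1_car := exist _ single1 single1_fin1.

Lemma Pfin1_eq (X Y : Pfin1_car) :
  (forall z, proj1_sig X z <-> proj1_sig Y z) -> X = Y.
Proof.
  destruct X as [X HX], Y as [Y HY]; simpl; intro E.
  assert (X = Y) as <-.
  { apply functional_extensionality; intro z; apply propositional_extensionality; apply E. }
  f_equal; apply proof_irrelevance.
Qed.

Lemma Pfin1_opA X Y Z : Pfin1_op X (Pfin1_op Y Z) = Pfin1_op (Pfin1_op X Y) Z.
Proof.
  apply Pfin1_eq; intro z; simpl; unfold setmul; split.
  - intros (x & w & Hx & (y & u & Hy & Hu & ->) & ->).
    exists (mop x y), u; split; [exists x, y; auto | split; auto]. apply mopA.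
  - intros (w & u & (x & y & Hx & Hy & ->) & Hu & ->).
    exists x, (mop y u); split; [auto | split; [exists y, u; auto | symmetry; apply mopA]].
Qed.

Lemma Pfin1_op1l X : Pfin1_op Pfin1_one X = X.
Proof.
  apply Pfin1_eq; intro z; simpl; unfold setmul, single1; split.
  - intros (x & y & -> & Hy & ->); now rewrite mop1l.
  - intro Hz; exists (mone H), z; repeat split; auto; now rewrite mop1l.
Qed.

Lemma Pfin1_op1r X : Pfin1_op X Pfin1_one = X.
Proof.
  apply Pfin1_eq; intro z; simpl; unfold setmul, single1; split.
  - intros (x & y & Hx & -> & ->); now rewrite mop1r.
  - intro Hz; exists z, (mone H); repeat split; auto; now rewrite mop1r.
Qed.

Definition Pfin1 : monoid :=
  @Monoid Pfin1_car Pfin1_op Pfin1_one Pfin1_opA Pfin1_op1l Pfin1_op1r.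

End Pfin1.

(* Main.v *)
Require Import Defs.
From Stdlib Require Import List.
From Stdlib Require Import Permutation Classical Lia.
Import ListNotations.

Arguments mdivides {M}.
Arguments massoc {M}.
Arguments proper_divisor {M}.
Arguments unit_divisor {M}.
Arguments irreducible {M}.
Arguments word_prod {M}.
Arguments factorization {M}.
Arguments wle {M}.
Arguments wequiv {M}.

Local Notation "x ** y" := (mop x y) (at level 40, left associativity).

Lemma ab_idem {H : monoid} (AB : almost_breakable H) (x : H) : x ** x = x.
Proof. destruct (AB x x) as [[E|E]|[E|E]]; exact E. Qed.

Lemma ab_tot {H : monoid} (AB : almost_breakable H) (x t : H) :
  (x ** t) ** x = x \/ (t ** x) ** t = t.
Proof.
  destruct (AB x t) as [[E|E]|[E|E]].
  - left; rewrite E; apply (ab_idem AB).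
  - right; rewrite <- mopA, E; apply (ab_idem AB).
  - left; rewrite <- mopA, E; apply (ab_idem AB).
  - right; rewrite E; apply (ab_idem AB).
Qed.

Lemma ab_split {H : monoid} (AB : almost_breakable H) (x s : H) :
  (x ** s) ** x = x -> x ** s = x \/ s ** x = x.
Proof.
  intro Hm; destruct (AB x s) as [[E|E]|[E|E]].
  - left; exact E.
  - right; rewrite E in Hm; exact Hm.
  - right; exact E.
  - left; rewrite <- mopA, E in Hm; exact Hm.
Qed.

Lemma ab_trans {H : monoid} (AB : almost_breakable H) (t x s : H) :
  (t ** x) ** t = t -> (x ** s) ** x = x -> (t ** s) ** t = t.
Proof.
  intros Ht Hx.
  destruct (ab_split AB _ _ Hx) as [A1|A1];
  destruct (ab_split AB _ _ Ht) as [B1|B1];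
  destruct (AB t s) as [[E|E]|[E|E]];
  try (rewrite E; apply (ab_idem AB));
  try (rewrite <- mopA, E; apply (ab_idem AB)).
  - assert (T : t = s).
    { transitivity (t ** (x ** s)). { rewrite A1, B1; reflexivity. }
      rewrite mopA, B1; exact E. }
    rewrite E, T; apply (ab_idem AB).
  - rewrite <- mopA, E. rewrite <- B1 at 1. rewrite <- mopA, A1. exact B1.
  - assert (S : s = x).
    { transitivity (x ** (t ** s)). { rewrite mopA, B1, E; reflexivity. }
      rewrite E; exact A1. }
    rewrite E, S; exact B1.
  - rewrite <- mopA, E.
    assert (T : t = x).
    { transitivity (x ** (s ** t)). { rewrite mopA, A1, B1; reflexivity. }
      rewrite E; exact A1. }
    rewrite T; exact A1.
  - assert (T : t = x).
    { transitivity (t ** (s ** x)). { rewrite A1, B1; reflexivity. }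
      rewrite mopA, E; exact A1. }
    rewrite E, T; exact A1.
  - rewrite <- mopA, E.
    assert (S : s = x).
    { transitivity (s ** (t ** x)). { rewrite B1, E; reflexivity. }
      rewrite mopA, E; exact A1. }
    rewrite S; exact B1.
  - rewrite E. rewrite <- B1 at 1. rewrite mopA, A1. exact B1.
  - rewrite <- mopA, E.
    assert (T : t = s).
    { transitivity ((s ** x) ** t). { rewrite A1, B1; reflexivity. }
      rewrite <- mopA, B1; exact E. }
    rewrite T; apply (ab_idem AB).
Qed.

Lemma ab_noLR {H : monoid} (AB : almost_breakable H) (x u v : H) :
  u ** x = x -> x ** u = u -> u <> x ->
  x ** v = x -> v ** x = v -> v <> x -> False.
Proof.
  intros Hux Hxu Nu Hxv Hvx Nv.
  destruct (AB u v) as [[E|E]|[E|E]].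
  - apply Nu. transitivity (u ** (v ** x)). { rewrite Hvx, E; reflexivity. }
    rewrite mopA, E; exact Hux.
  - apply Nv. transitivity (x ** (u ** v)). { rewrite mopA, Hxu, E; reflexivity. }
    rewrite E; exact Hxv.
  - apply Nv. transitivity (v ** (u ** x)). { rewrite Hux, Hvx; reflexivity. }
    rewrite mopA, E; exact Hux.
  - apply Nu. transitivity (x ** (v ** u)). { rewrite mopA, Hxv, Hxu; reflexivity. }
    rewrite E; exact Hxv.
Qed.

Lemma ab_min {H : monoid} (AB : almost_breakable H) (l : list H) :
  (exists y, In y l /\ y <> mone H) ->
  exists x, In x l /\ x <> mone H /\ forall s, In s l -> (x ** s) ** x = x.
Proof.
  induction l as [|a l IH]; intros [y [Hy Hy1]]; [destruct Hy|].
  destruct (classic (exists y, In y l /\ y <> mone H)) as [Ex|Nx].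
  - destruct (IH Ex) as [x [Hx [Hx1 Hm]]].
    destruct (classic (a = mone H)) as [Ea|Na].
    + exists x; split; [right; exact Hx|split; [exact Hx1|]].
      intros s [<-|Hs]; [rewrite Ea, mop1r; apply (ab_idem AB)| apply Hm; exact Hs].
    + destruct (ab_tot AB x a) as [T|T].
      * exists x; split; [right; exact Hx|split; [exact Hx1|]].
        intros s [<-|Hs]; [exact T| apply Hm; exact Hs].
      * exists a; split; [left; reflexivity|split; [exact Na|]].
        intros s [<-|Hs]; [rewrite !(ab_idem AB); reflexivity|].
        exact (ab_trans AB a x s T (Hm s Hs)).
  - destruct Hy as [<-|Hy]; [|exfalso; apply Nx; exists y; auto].
    exists a; split; [left; reflexivity|split; [exact Hy1|]].
    intros s [<-|Hs]; [rewrite !(ab_idem AB); reflexivity|].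
    destruct (classic (s = mone H)) as [->|Ns].
    + rewrite mop1r; apply (ab_idem AB).
    + exfalso; apply Nx; exists s; auto.
Qed.

Lemma ab_side {H : monoid} (AB : almost_breakable H) (l : list H) (x : H) :
  (forall s, In s l -> (x ** s) ** x = x) ->
  (forall s, In s l -> x ** s = x \/ x ** s = s) \/
  (forall s, In s l -> s ** x = x \/ s ** x = s).
Proof.
  intro Hm.
  destruct (classic (forall s, In s l -> x ** s = x \/ x ** s = s)) as [L|L]; [left; exact L|].
  right.
  destruct (classic (forall s, In s l -> s ** x = x \/ s ** x = s)) as [R|R]; [exact R|].
  exfalso.
  apply not_all_ex_not in L as [s1 L]. apply imply_to_and in L as [Hs1 L].
  apply not_or_and in L as [L1 L2].
  apply not_all_ex_not in R as [s2 R]. apply imply_to_and in R as [Hs2 R].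
  apply not_or_and in R as [R1 R2].
  assert (E1 : s1 ** x = x).
  { destruct (AB x s1) as [[E|E]|[E|E]]; try contradiction; [exact E|].
    exfalso; apply L1. pose proof (Hm s1 Hs1) as M. rewrite <- mopA, E in M. exact M. }
  assert (E2 : x ** s2 = x).
  { destruct (AB x s2) as [[E|E]|[E|E]]; try contradiction; [exact E|].
    exfalso; apply R1. pose proof (Hm s2 Hs2) as M. rewrite E in M. exact M. }
  apply (ab_noLR AB x (x ** s1) (s2 ** x)).
  - exact (Hm s1 Hs1).
  - rewrite mopA, (ab_idem AB); reflexivity.
  - exact L1.
  - rewrite mopA; exact (Hm s2 Hs2).
  - rewrite <- mopA, (ab_idem AB); reflexivity.
  - exact R1.
Qed.

Lemma mdiv_refl {M : monoid} (x : M) : mdivides x x.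
Proof. exists (mone M), (mone M). rewrite mop1r, mop1l; reflexivity. Qed.

Lemma word_prod_app {M : monoid} (a b : list M) :
  word_prod (a ++ b) = word_prod a ** word_prod b.
Proof.
  induction a as [|x a IH]; simpl; [rewrite mop1l; reflexivity|].
  rewrite IH, mopA; reflexivity.
Qed.

Lemma subword_perm {A : Type} (s t : list A) :
  subword s t -> exists r, Permutation t (s ++ r).
Proof.
  induction 1 as [|x s t _ [r IH]|x s t _ [r IH]].
  - exists []; reflexivity.
  - exists (x :: r). eapply perm_trans; [apply perm_skip; exact IH|].
    apply Permutation_middle.
  - exists r; simpl; apply perm_skip; exact IH.
Qed.

Lemma subword_app {A : Type} (a r : list A) : subword a (a ++ r).
Proof.
  induction a as [|x a IH]; simpl.
  - induction r; constructor; auto.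
  - constructor; exact IH.
Qed.

Section P.
Local Notation mem X z := (proj1_sig X z).

Lemma one_in {H : monoid} (X : Pfin1 H) : mem X (mone H).
Proof. exact (proj2 (proj2_sig X)). Qed.

Lemma div_sub {H : monoid} (X Y : Pfin1 H) :
  mdivides X Y -> forall z, mem X z -> mem Y z.
Proof.
  intros [A [B ->]] z Hz. simpl. unfold setmul.
  exists (mone H ** z), (mone H). split.
  - exists (mone H), z. split; [apply one_in|split; [exact Hz|reflexivity]].
  - split; [apply one_in|]. rewrite mop1r, mop1l; reflexivity.
Qed.

Lemma assoc_eq {H : monoid} (X Y : Pfin1 H) : massoc X Y -> X = Y.
Proof.
  intros [D1 D2]. apply Pfin1_eq; intro z; split; apply div_sub; assumption.
Qed.

Lemma F2_eq {H : monoid} (a s : list (Pfin1 H)) : Forall2 massoc a s -> a = s.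
Proof.
  induction 1; [reflexivity|]. f_equal; [apply assoc_eq; assumption|assumption].
Qed.

Lemma wle_iff {H : monoid} (a b : list (Pfin1 H)) :
  wle a b <-> exists r, Permutation b (a ++ r).
Proof.
  split.
  - intros [b' [Pb [s [Sw F2]]]].
    apply F2_eq in F2; subst s.
    destruct (subword_perm _ _ Sw) as [r Pr]. exists r.
    eapply perm_trans; eassumption.
  - intros [r Pr]. exists (a ++ r). split; [exact Pr|].
    exists a. split; [apply subword_app|].
    clear Pr. induction a; constructor; auto. split; apply mdiv_refl.
Qed.
End P.

Lemma exists_min {H : monoid} (X : Pfin1 H) : forall n (c : list (Pfin1 H)),
  length c < n -> factorization c X ->
  exists d, @minimal_factorization (Pfin1 H) d X /\ exists r, Permutation c (d ++ r).
Proof.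
  induction n as [|n IH]; intros c Hc F; [lia|].
  destruct (classic (@minimal_factorization (Pfin1 H) c X)) as [Mc|NM].
  - exists c; split; [exact Mc|]. exists []; rewrite app_nil_r; reflexivity.
  - unfold minimal_factorization in NM. apply not_and_or in NM as [NM|NM]; [contradiction|].
    apply NNPP in NM as [b [Fb [Wbc Ncb]]].
    apply wle_iff in Wbc as [r Pr].
    destruct r as [|r0 r].
    + exfalso; apply Ncb; apply wle_iff. exists [].
      rewrite app_nil_r in *; symmetry; exact Pr.
    + pose proof (Permutation_length Pr) as L. rewrite length_app in L; simpl in L.
      assert (Lb : length b < n) by (unfold mcar in *; simpl in *; lia).
      destruct (IH b Lb Fb) as [d [Md [r' Pd]]].
      exists d; split; [exact Md|]. exists (r' ++ r0 :: r).
      rewrite app_assoc. eapply perm_trans; [exact Pr|].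
      apply Permutation_app_tail; exact Pd.
Qed.

Definition pairset {H : monoid} (x : H) : H -> Prop := fun z => z = mone H \/ z = x.

Lemma pair_fin1 {H : monoid} (x : H) : is_fin1 H (pairset x).
Proof.
  split.
  - exists [mone H; x]. intro z; unfold pairset; simpl.
    split; [intros [E|E]; auto|intros [E|[E|[]]]; auto].
  - left; reflexivity.
Qed.

Definition pairP {H : monoid} (x : H) : Pfin1 H := exist _ (pairset x) (pair_fin1 x).

Lemma nonunit_elem {H : monoid} (Y : Pfin1 H) :
  ~ unit_divisor Y -> exists y, proj1_sig Y y /\ y <> mone H.
Proof.
  intro U. apply NNPP; intro N. apply U.
  assert (E : Y = mone (Pfin1 H)).
  { apply Pfin1_eq; intro z; simpl; unfold single1; split.
    - intro Hz; apply NNPP; intro Nz; apply N; eauto.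
    - intros ->; apply one_in. }
  rewrite E at 1. apply mdiv_refl.
Qed.

Lemma pairP_irr {H : monoid} (x : H) : x <> mone H -> irreducible (pairP x).
Proof.
  intro Hx; split.
  - intro U. pose proof (div_sub _ _ U x (or_intror eq_refl)) as E.
    simpl in E; unfold single1 in E; contradiction.
  - intros Y Z UY UZ [DY NY] _ E. apply NY.
    destruct (nonunit_elem Y UY) as [y [Hy Hy1]].
    assert (Ey : Y = pairP x).
    { apply Pfin1_eq; intro z; split.
      - apply div_sub; exact DY.
      - simpl; unfold pairset; intros [->| ->]; [apply one_in|].
        destruct (div_sub _ _ DY y Hy) as [E1|E1]; [contradiction|].
        subst y; exact Hy. }
    rewrite Ey; split; apply mdiv_refl.
Qed.

Lemma pairP_inj {H : monoid} (x y : H) : x <> mone H -> pairP x = pairP y -> x = y.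
Proof.
  intros Hx E. assert (I : proj1_sig (pairP x) x) by (right; reflexivity).
  rewrite E in I. destruct I as [I|I]; [contradiction|exact I].
Qed.

Lemma remove_ex {H : monoid} (x : H) (l : list H) :
  exists l', (forall z, In z l' <-> In z l /\ z <> x) /\
             length l' <= length l /\ (In x l -> length l' < length l).
Proof.
  induction l as [|a l [l' [H1 [H2 H3]]]].
  - exists []; simpl; split; [tauto|split; [lia|tauto]].
  - destruct (classic (a = x)) as [->|N].
    + exists l'; split; [|simpl; split; [lia|intros _; lia]].
      intro z; rewrite H1; simpl; split; [tauto|intros [[<-|I] N]; [now contradict N|auto]].
    + exists (a :: l'); split; [|simpl; split; [lia|]].
      * intro z; simpl; rewrite H1; split; [intros [<-|[I N']]; auto|].
        intros [[<-|I] N']; auto.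
      * intros [<-|I]; [contradiction|]. specialize (H3 I); lia.
Qed.

Lemma canon {H : monoid} (AB : almost_breakable H) : forall n (l : list H) (X : Pfin1 H),
  length l < n -> (forall z, proj1_sig X z <-> z = mone H \/ In z l) ->
  exists c, factorization c X /\ NoDup c /\
    Forall (fun A => exists y, In y l /\ y <> mone H /\ A = pairP y) c.
Proof.
  induction n as [|n IH]; intros l X Hl HX; [lia|].
  destruct (classic (exists y, In y l /\ y <> mone H)) as [Ey|Ny].
  2:{ exists []. split; [split; [constructor|]|split; constructor].
      simpl. symmetry. apply Pfin1_eq; intro z; simpl; unfold single1; rewrite HX.
      split; [intros [->|I]; [reflexivity|]|intros ->; left; reflexivity].
      apply NNPP; intro N; apply Ny; eauto. }
  destruct (ab_min AB l Ey) as [x [Hxl [Hx1 Hm]]].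
  destruct (remove_ex x l) as [l' [Hl' [_ Hlen]]].
  specialize (Hlen Hxl).
  assert (F : is_fin1 H (fun z => proj1_sig X z /\ z <> x)).
  { split.
    - exists (mone H :: l'). intro z; simpl; rewrite Hl', HX.
      split.
      + intros [[->|I] N]; [left; reflexivity|right; auto].
      + intros [<-|[I N]]; [split; [left; reflexivity|intro E; apply Hx1; auto]|auto].
    - split; [apply one_in|intro E; apply Hx1; auto]. }
  pose (X' := exist _ _ F : Pfin1 H).
  assert (HX' : forall z, proj1_sig X' z <-> z = mone H \/ In z l').
  { intro z; simpl; rewrite Hl', HX. split.
    - intros [[->|I] N]; [left; reflexivity|right; auto].
    - intros [->|[I N]]; [split; [left; reflexivity|intro E; apply Hx1; auto]|auto]. }
  destruct (IH l' X' ltac:(lia) HX') as [c' [[Fc' Wc'] [Nc' Lc']]].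
  assert (Nin : ~ In (pairP x) c').
  { intro I. rewrite Forall_forall in Lc'. destruct (Lc' _ I) as [y [Iy [_ Ey']]].
    apply pairP_inj in Ey'; [|exact Hx1]. subst y. apply Hl' in Iy. tauto. }
  assert (Lc : Forall (fun A => exists y, In y l /\ y <> mone H /\ A = pairP y) c').
  { eapply Forall_impl; [|exact Lc']. intros A [y [Iy [Ny Ey']]].
    exists y; split; [apply Hl' in Iy; tauto|auto]. }
  assert (Xin : forall s, proj1_sig X s -> s = mone H \/ In s l) by (intros s; apply HX).
  assert (inX : forall s, In s l -> proj1_sig X s) by (intros s I; apply HX; auto).
  destruct (ab_side AB l x Hm) as [Side|Side].
  - exists (pairP x :: c'). split; [split|split].
    + constructor; [apply pairP_irr; exact Hx1|exact Fc'].
    + simpl. rewrite Wc'. symmetry. apply Pfin1_eq; intro z; simpl; unfold setmul, pairset.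
      split.
      * destruct (classic (z = x)) as [->|Nz].
        -- intros _. exists x, (mone H). split; [right; reflexivity|].
           split; [split; [apply one_in|intro E; apply Hx1; auto]|rewrite mop1r; reflexivity].
        -- intros Hz. exists (mone H), z. split; [left; reflexivity|].
           split; [split; auto|rewrite mop1l; reflexivity].
      * intros [p [q [[-> | ->] [[Hq _] ->]]]]; [rewrite mop1l; exact Hq|].
        destruct (Xin q Hq) as [->|Iq]; [rewrite mop1r; apply inX; exact Hxl|].
        destruct (Side q Iq) as [E|E]; rewrite E; [apply inX; exact Hxl|exact Hq].
    + constructor; assumption.
    + constructor; [exists x; auto|exact Lc].
  - exists (c' ++ [pairP x]). split; [split|split].
    + apply Forall_app; split; [exact Fc'|constructor; [apply pairP_irr; exact Hx1|constructor]].
    + rewrite word_prod_app. change (word_prod [pairP x]) with (pairP x ** mone (Pfin1 H)). rewrite (mop1r (Pfin1 H) (pairP x)), Wc'. symmetry.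
      apply Pfin1_eq; intro z; simpl; unfold setmul, pairset.
      split.
      * destruct (classic (z = x)) as [->|Nz].
        -- intros _. exists (mone H), x. split; [split; [apply one_in|intro E; apply Hx1; auto]|].
           split; [right; reflexivity|rewrite mop1l; reflexivity].
        -- intros Hz. exists z, (mone H). split; [split; auto|].
           split; [left; reflexivity|rewrite mop1r; reflexivity].
      * intros [q [p [[Hq _] [[-> | ->] ->]]]]; [rewrite mop1r; exact Hq|].
        destruct (Xin q Hq) as [->|Iq]; [rewrite mop1l; apply inX; exact Hxl|].
        destruct (Side q Iq) as [E|E]; rewrite E; [apply inX; exact Hxl|exact Hq].
    + eapply Permutation_NoDup; [apply Permutation_cons_append|]. constructor; assumption.
    + apply Forall_app; split; [exact Lc|constructor; [exists x; auto|constructor]].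
Qed.

Theorem corollary4p3 (H : monoid) :
  almost_breakable H ->
  UmF (Pfin1 H) ->
  forall (X : Pfin1 H) (a : list (Pfin1 H)),
    @minimal_factorization (Pfin1 H) a X -> NoDup a.
Proof.
  intros AB [_ U] X a Ma.
  destruct (proj2_sig X) as [[lX HlX] X1].
  destruct (canon AB (S (length lX)) lX X ltac:(lia)) as [c [Fc [Nc _]]].
  { intro z; rewrite <- HlX; split; [intro; right; auto|intros [->|I]; auto]. }
  destruct (exists_min X (S (length c)) c ltac:(lia) Fc) as [d [Md [r Pr]]].
  destruct (U X a d Ma Md) as [Wad _].
  apply wle_iff in Wad as [r2 P2].
  assert (P : Permutation c (a ++ (r2 ++ r))).
  { rewrite app_assoc. eapply perm_trans; [exact Pr|]. apply Permutation_app_tail; exact P2. }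
  apply (NoDup_app_remove_r _ (r2 ++ r)).
  eapply Permutation_NoDup; [exact P|exact Nc].
Qed.
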